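(* For integers $K\ge 3$ and $1\le\ell\le K$, let $M(K,\ell)$ be the number of primitive cyclic compositions of $K$ into $\ell$ positive parts, and define $R(K)=2^{-K}\sum_{K/\log_2 3<\ell\le K} M(K,\ell)\bigl(\log_2 3-K/\ell\bigr)$. Then for each $K\ge 3$, $$R(K)\le(\log_2 3-1)\,\Pr\!\Bigl[\mathrm{Bin}(K-1,\tfrac12)\ge\lceil K/\log_2 3\rceil-1\Bigr].$$
   Context: A primitive cyclic composition of $K$ into $\ell$ parts is a rotation class of compositions $(k_1,\ldots,k_\ell)$ of $K$ into positive integers that is not fixed by any nontrivial cyclic rotation. $\mathrm{Bin}(K-1,1/2)$ is a binomial random variable. *)

(* Defs.v *)
From HB Require Import structures.
From mathcomp Require Import all_boot all_order all_algebra.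
From mathcomp Require Import reals exp.
Set Implicit Arguments. Unset Strict Implicit. Unset Printing Implicit Defensive.
Import Order.TTheory GRing.Theory Num.Theory.

Definition is_comp (K l : nat) (s : seq nat) : bool :=
  [&& size s == l, all (fun x => 0 < x) s & sumn s == K].

(* all compositions of K into l parts (every part is <= K) *)
Definition comps (K l : nat) : seq (seq nat) :=
  undup [seq s <- [seq map (@nat_of_ord K.+1) (tval t) | t <- enum {: l.-tuple 'I_K.+1}]
        | is_comp K l s].

Definition primitive (s : seq nat) : bool :=
  all (fun i => rot i s != s) (iota 1 (size s).-1).

Definition roteq (s t : seq nat) : bool :=
  has (fun i => rot i s == t) (iota 0 (size s)).

Definition prim_comps (K l : nat) : seq (seq nat) :=
  [seq s <- comps K l | primitive s].

(* M(K,l): number of rotation classes of primitive compositions of K into l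
   parts; a class is represented by the sublist of prim_comps K l it forms. *)
Definition M (K l : nat) : nat :=
  size (undup [seq [seq t <- prim_comps K l | roteq s t] | s <- prim_comps K l]).

Local Open Scope ring_scope.

Definition log2_3 {R : realType} : R := ln 3 / ln 2.

Definition RK {R : realType} (K : nat) : R :=
  2 ^- K * \sum_(1 <= l < K.+1 | K%:R / log2_3 < l%:R :> R)
             (M K l)%:R * (log2_3 - K%:R / l%:R).

Definition binom_tail_half {R : realType} (n : nat) (m : int) : R :=
  \sum_(j < n.+1 | m <= j%:Z) ('C(n, j))%:R / 2 ^+ n.

(* Main.v *)
From HB Require Import structures.
From mathcomp Require Import all_boot all_order all_algebra.
From mathcomp Require Import reals exp ring lra.
Import Order.TTheory GRing.Theory Num.Theory.
Local Open Scope ring_scope.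

Lemma gen (R : realType) (L : R) (M : nat -> nat) (k : nat) (hL1 : 1 < L) (hL2 : L < 2)
  (hM : forall l, (M l <= 'C(k.+1, l))%N) :
  2 ^- k.+1 * \sum_(1 <= l < k.+2 | k.+1%:R / L < l%:R :> R) (M l)%:R * (L - k.+1%:R / l%:R)
  <= (L - 1) * \sum_(j < k.+1 | Num.ceil (k.+1%:R / L : R) - 1 <= j%:Z) 'C(k, j)%:R / 2 ^+ k.
Proof.
have L0 : 0 < L by apply: lt_trans hL1.
rewrite big_add1 /= big_mkord !mulr_sumr big_mkcond [X in _ <= X]big_mkcond /=.
apply: ler_sum => i _.
case: ifP => hP; last first.
  case: ifP => // _; apply: mulr_ge0; first by rewrite subr_ge0 ltW.
  by apply: divr_ge0; rewrite ?ler0n // exprn_ge0.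
have hQ : Num.ceil (k.+1%:R / L : R) - 1 <= i%:Z.
  rewrite lerBlDr; have : Num.ceil (k.+1%:R / L : R) <= (i.+1)%:Z by rewrite ceil_le_int; exact: ltW.
  by rewrite -PoszD addn1.
rewrite hQ.
have lpos : (0 : R) < i.+1%:R by rewrite ltr0n.
have hKl : (k.+1%:R : R) < i.+1%:R * L by rewrite -ltr_pdivrMr.
have hK2 : (k.+1 <= 2 * i.+1)%N.
  rewrite -(ler_nat R) natrM; apply: ltW; apply: (lt_le_trans hKl).
  by rewrite mulrC ler_pM2r // ltW.
have hC : ('C(k.+1, i.+1) <= 2 * 'C(k, i))%N.
  rewrite -(@leq_pmul2l i.+1) // mulnCA -mul_bin_diag /= mulnA leq_mul2r.
  by rewrite hK2 orbT.
have hB1 : L - k.+1%:R / i.+1%:R <= L - 1.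
  have : 1 <= k.+1%:R / i.+1%:R :> R by rewrite ler_pdivlMr // mul1r ler_nat; exact: ltn_ord.
  move: (k.+1%:R / i.+1%:R : R) => t; lra.
have hB0 : 0 <= L - k.+1%:R / i.+1%:R.
  by rewrite subr_ge0 ler_pdivrMr // ltW // mulrC.
have hMr : ((M i.+1)%:R : R) <= (2 * 'C(k, i))%:R by rewrite ler_nat (leq_trans (hM _)).
apply: le_trans (ler_wpM2l _ (ler_pM _ _ hMr hB1)) _.
- by rewrite invr_ge0 exprn_ge0.
- exact: ler0n.
- exact: hB0.
rewrite exprS invfM natrM.
have h2 : (2 : R) != 0 by rewrite pnatr_eq0.
have ht : (2 : R) ^+ k != 0 by rewrite expf_neq0.
rewrite le_eqVlt; apply/orP; left; apply/eqP; by field.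
Qed.

Require Import Defs.
Lemma sum_eq1 (h N : nat) : (h < N)%N -> (\sum_(0 <= a < N) (h == a : nat))%N = 1%N.
Proof.
elim: N => // N IH hN; rewrite big_nat_recr //=.
case: (eqVneq h N) => [->|ne].
  rewrite big1_seq ?eqxx // => a /andP[_]; rewrite mem_index_iota => /andP[_ aN].
  by rewrite eqn_leq leqNgt aN.
by rewrite IH ?addn0 // ltn_neqAle ne -ltnS.
Qed.

Lemma size_split_head (N : nat) (S : seq (seq nat)) :
  all (fun s => head 0%N s < N)%N S ->
  size S = (\sum_(0 <= a < N) count (fun s => head 0%N s == a) S)%N.
Proof.
elim: S => [|x S IH] /=; first by rewrite big1.
move=> /andP[hx hS]; rewrite (eq_bigr (fun a => (head 0%N x == a : nat) + count (fun s => head 0%N s == a) S)%N); last by move=> a _.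
by rewrite big_split /= sum_eq1 // -IH.
Qed.

Lemma hockey (K l : nat) : (\sum_(0 <= m < K) 'C(m, l))%N = 'C(K, l.+1).
Proof.
elim: K => [|K IH]; first by rewrite big_geq.
by rewrite big_nat_recr //= IH binS addnC.
Qed.

Lemma comp_count (l K : nat) (S : seq (seq nat)) :
  uniq S -> all (is_comp K l) S -> (size S <= 'C(K, l))%N.
Proof.
elim: l K S => [|l IH] K S uS aS.
  case: S uS aS => [|x [|y S]] uS aS; rewrite ?bin0 //.
  have x0 : x = [::].
    apply: size0nil; move/allP: aS => /(_ x (mem_head _ _)) /and3P[/eqP] //.
  have y0 : y = [::].
    apply: size0nil; have /(allP aS) /and3P[/eqP] // : y \in [:: x, y & S] by rewrite in_cons mem_head orbT.
  by move: uS; rewrite x0 y0 cons_uniq mem_head.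
have hd : all (fun s => head 0%N s < K.+1)%N S.
  apply/allP => s /(allP aS) /and3P[_ _ /eqP <-].
  by case: s => //= a s; rewrite ltnS leq_addr.
rewrite (@size_split_head K.+1 S hd) big_nat_recl //=.
have -> : count (fun s => head 0%N s == 0%N) S = 0%N.
  apply/eqP; rewrite -leqn0 leqNgt -has_count; apply/hasPn => s /(allP aS) /and3P[sz ps _].
  by case: s sz ps => //= a s _ /andP[a0 _]; rewrite -lt0n a0.
rewrite add0n -hockey big_mkord [X in (_ <= X)%N]big_mkord.
rewrite [X in (_ <= X)%N](reindex_inj rev_ord_inj) /=.
apply: leq_sum => i _.
set S' := [seq behead s | s <- S & head 0%N s == i.+1].
have -> : count (fun s => head 0%N s == i.+1) S = size S' by rewrite size_map size_filter.
apply: IH.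
  rewrite map_inj_in_uniq ?filter_uniq // => s t.
  rewrite !mem_filter => /andP[/eqP hs s1] /andP[/eqP ht t1] eb.
  move: (allP aS s s1) (allP aS t t1) => /and3P[/eqP ss _ _] /and3P[/eqP st _ _].
  case: s hs ss eb {s1} => // a s /= -> _ ->.
  by case: t ht st {t1} => //= b t ->.
apply/allP => u /mapP[s]; rewrite mem_filter => /andP[/eqP hs /(allP aS)] /and3P[/eqP ss ps /eqP sumS] ->.
case: s hs ss ps sumS => //= a s -> [ss] /andP[_ ps].
rewrite /is_comp ss ps eqxx /=; move: (i : nat) => j sumS.
by rewrite -sumS addKn.
Qed.

Lemma M_le (K l : nat) : (M K l <= 'C(K, l))%N.
Proof.
rewrite /M; apply: leq_trans (size_undup _) _; rewrite size_map /prim_comps size_filter.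
apply: leq_trans (count_size _ _) _; apply: comp_count; first exact: undup_uniq.
by apply/allP => s; rewrite mem_undup mem_filter => /andP[].
Qed.

Local Open Scope ring_scope.

Lemma log2_3_bounds (R : realType) : 1 < log2_3 (R := R) < 2.
Proof.
have l2 : 0 < ln (2 : R) by apply: ln_gt0; rewrite ltr1n.
rewrite /log2_3 ltr_pdivlMr // ltr_pdivrMr // mul1r.
apply/andP; split; first by rewrite ltr_ln ?posrE ?ltr0n // ltr_nat.
rewrite mulr_natl -lnXn ?ltr0n //.
by rewrite ltr_ln ?posrE ?exprn_gt0 ?ltr0n // -natrX ltr_nat.
Qed.

Theorem mainTheorem10 (R : realType) (K : nat) (hK : (3 <= K)%N) :
  RK (R := R) K <=
  (log2_3 - 1) * binom_tail_half (R := R) K.-1 (Num.ceil (K%:R / log2_3 : R) - 1).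
Proof.
case: K hK => // k _.
have /andP[h1 h2] := log2_3_bounds R.
rewrite /RK /binom_tail_half /=.
apply: gen => //.
exact: M_le.
Qed.
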